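(* Let $R$ be a Dedekind domain and $G\in R^{n\times n}$ with $GG^{T}=\ell^2\mathbf{1}$ for some nonzero $\ell\in R$, where $\mathbf{1}$ is the identity matrix. Let $\mathfrak{d}_1,\ldots,\mathfrak{d}_n$ be the Smith ideals of $G$. Then $\mathfrak{d}_i\mathfrak{d}_{n-i+1}=\ell^2R$ for every $i\leq n/2$.
   Context: The $i$th determinantal ideal $\mathfrak{D}_i\subseteq R$ of $G$ is the ideal generated by all $i\times i$ minors. The Smith ideals are defined by $\mathfrak{d}_1=\mathfrak{D}_1$ and, for $i>1$, $\mathfrak{d}_i$ is the unique ideal with $\mathfrak{d}_i\mathfrak{D}_{i-1}=\mathfrak{D}_i$ if $\mathfrak{D}_{i-1}\neq0$, and $\mathfrak{d}_i=0$ otherwise. *)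

(* Defs.v *)
From HB Require Import structures.
From mathcomp Require Import all_boot all_order all_algebra.
From mathcomp Require Import fraction.
Set Implicit Arguments. Unset Strict Implicit. Unset Printing Implicit Defensive.
Import Order.TTheory GRing.Theory Num.Theory.
Local Open Scope ring_scope.

Definition is_ideal (R : comPzRingType) (I : R -> Prop) : Prop :=
  [/\ I 0, (forall x y, I x -> I y -> I (x + y)) & (forall r x, I x -> I (r * x))].

Definition eq_ideal (R : comPzRingType) (I J : R -> Prop) : Prop :=
  forall x, I x <-> J x.

Definition gen_ideal (R : comPzRingType) (S : R -> Prop) : R -> Prop :=
  fun x => exists (s : seq (R * R)),
    (forall p, p \in s -> S p.2) /\ x = \sum_(p <- s) p.1 * p.2.

Definition mul_ideal (R : comPzRingType) (I J : R -> Prop) : R -> Prop :=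
  gen_ideal (fun x => exists a b, [/\ I a, J b & x = a * b]).

Definition zero_ideal (R : comPzRingType) : R -> Prop := fun x => x = 0.

Definition principal_ideal (R : comPzRingType) (a : R) : R -> Prop :=
  fun x => exists r, x = r * a.

Definition nonzero_ideal (R : comPzRingType) (I : R -> Prop) : Prop :=
  exists x, I x /\ x <> 0.

Definition prime_ideal (R : comPzRingType) (P : R -> Prop) : Prop :=
  [/\ is_ideal P, ~ P 1 & forall a b, P (a * b) -> P a \/ P b].

Definition maximal_ideal (R : comPzRingType) (M : R -> Prop) : Prop :=
  [/\ is_ideal M, ~ M 1 &
      forall J, is_ideal J -> (forall x, M x -> J x) -> ~ J 1 -> eq_ideal J M].

Definition noetherian (R : comPzRingType) : Prop :=
  forall I : R -> Prop, is_ideal I ->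
    exists s : seq R, eq_ideal I (gen_ideal (fun x => x \in s)).

Definition integrally_closed (R : idomainType) : Prop :=
  forall x : {fraction R},
    (exists p : {poly R}, p \is monic /\ root (map_poly (@FracField.tofrac R) p) x) ->
    exists r : R, x = FracField.tofrac r.

Definition dim_le1 (R : comPzRingType) : Prop :=
  forall P : R -> Prop, prime_ideal P -> nonzero_ideal P -> maximal_ideal P.

Definition dedekind (R : idomainType) : Prop :=
  [/\ noetherian R, integrally_closed R & dim_le1 R].

(* Minors are
   determinants of the submatrices obtained by choosing rows f and columns g
   (non-injective choices give 0, reorderings give +-minors: same ideal). *)
Definition det_ideal (R : comPzRingType) (m n : nat) (G : 'M[R]_(m, n)) (i : nat)
  : R -> Prop :=
  gen_ideal (fun x => exists (f : 'I_i -> 'I_m) (g : 'I_i -> 'I_n),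
                        x = \det (mxsub f g G)).

Definition smith_ideals (R : comPzRingType) (n : nat) (G : 'M[R]_n)
  (d : nat -> R -> Prop) : Prop :=
  eq_ideal (d 1%N) (det_ideal G 1) /\
  forall i : nat, (1 < i <= n)%N ->
    (nonzero_ideal (det_ideal G i.-1) ->
       is_ideal (d i) /\
       eq_ideal (mul_ideal (d i) (det_ideal G i.-1)) (det_ideal G i)) /\
    (~ nonzero_ideal (det_ideal G i.-1) -> eq_ideal (d i) (@zero_ideal R)).

(* Main.v *)
Require Import Defs.
From HB Require Import structures.
From mathcomp Require Import all_boot all_order all_algebra.
From mathcomp Require Import all_fingroup fraction.
From mathcomp Require Import ring zify.
Import GRing.Theory.
Local Open Scope ring_scope.

Module Aux.
Set Implicit Arguments. Unset Strict Implicit. Unset Printing Implicit Defensive.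

Section Ideals.
Variable R : comPzRingType.
Implicit Types I J K S T : R -> Prop.

Lemma idl_M I r x : is_ideal I -> I x -> I (r * x).
Proof. by case=> _ _ hM; apply: hM. Qed.
Lemma idl_Mr I r x : is_ideal I -> I x -> I (x * r).
Proof. by rewrite mulrC; apply: idl_M. Qed.
Lemma idl_D I x y : is_ideal I -> I x -> I y -> I (x + y).
Proof. by case=> _ hD _; apply: hD. Qed.
Lemma idl_0 I : is_ideal I -> I 0.
Proof. by case. Qed.
Lemma idl_N I x : is_ideal I -> I x -> I (- x).
Proof. by move=> hI hx; rewrite -mulN1r; apply: idl_M. Qed.

Lemma ideal_sum I (U : eqType) (r : seq U) (F : U -> R) :
  is_ideal I -> (forall t, t \in r -> I (F t)) -> I (\sum_(t <- r) F t).
Proof.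
move=> hI; elim: r => [|a r IH] h; first by rewrite big_nil; apply: idl_0.
rewrite big_cons; apply: idl_D => //; first by apply: h; rewrite inE eqxx.
by apply: IH => t ht; apply: h; rewrite inE ht orbT.
Qed.

Lemma gen_ideal_is_ideal S : is_ideal (gen_ideal S).
Proof.
split.
- by exists [::]; rewrite big_nil.
- move=> x y [s1 [h1 ->]] [s2 [h2 ->]]; exists (s1 ++ s2); split.
    by move=> p; rewrite mem_cat => /orP [] ?; [apply: h1|apply: h2].
  by rewrite big_cat.
- move=> r x [s [h ->]]; exists [seq (r * p.1, p.2) | p <- s]; split.
    by move=> p /mapP [q qs ->] /=; apply: h.
  by rewrite big_map mulr_sumr; apply: eq_bigr => p _ /=; rewrite mulrA.
Qed.

Lemma gen_ideal_in S x : S x -> gen_ideal S x.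
Proof.
move=> hx; exists [:: (1, x)]; split; last by rewrite big_seq1 mul1r.
by move=> p; rewrite inE => /eqP ->.
Qed.

Lemma gen_ideal_sub S J : is_ideal J -> (forall x, S x -> J x) ->
  forall x, gen_ideal S x -> J x.
Proof.
move=> hJ hS x [s [hs ->]]; apply: ideal_sum => // p ps.
by apply: idl_M => //; apply/hS/hs.
Qed.

Lemma mul_ideal_in I J a b : I a -> J b -> mul_ideal I J (a * b).
Proof. by move=> ha hb; apply: gen_ideal_in; exists a, b. Qed.

Lemma mul_ideal_is_ideal I J : is_ideal (mul_ideal I J).
Proof. exact: gen_ideal_is_ideal. Qed.

Lemma mul_ideal_sub I J K : is_ideal K -> (forall a b, I a -> J b -> K (a * b)) ->
  forall x, mul_ideal I J x -> K x.
Proof. by move=> hK h; apply: gen_ideal_sub => // x [a [b [ha hb ->]]]; apply: h. Qed.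

Lemma ideal_lmul K a : is_ideal K -> is_ideal (fun y => K (a * y)).
Proof.
move=> hK; split.
- by rewrite mulr0; apply: idl_0.
- by move=> x y hx hy; rewrite mulrDr; apply: idl_D.
- by move=> r x hx; rewrite mulrCA; apply: idl_M.
Qed.

Lemma ideal_scale I c : is_ideal I -> is_ideal (fun y => exists z, I z /\ y = c * z).
Proof.
move=> hI; split.
- by exists 0; split; [apply: idl_0 | rewrite mulr0].
- move=> x y [z1 [h1 ->]] [z2 [h2 ->]]; exists (z1 + z2); split; last by rewrite mulrDr.
  exact: idl_D.
- move=> r x [z [h ->]]; exists (r * z); split; last by rewrite mulrCA.
  exact: idl_M.
Qed.

Lemma gen_mul_sub S T K : is_ideal K -> (forall a b, S a -> T b -> K (a * b)) ->
  forall x y, gen_ideal S x -> gen_ideal T y -> K (x * y).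
Proof.
move=> hK h x y hx hy.
pose J := fun x => forall y, gen_ideal T y -> K (x * y).
have hJ : is_ideal J.
  split.
  - by move=> z _; rewrite mul0r; apply: idl_0.
  - by move=> x1 x2 h1 h2 z hz; rewrite mulrDl; apply: (idl_D hK); [apply: h1|apply: h2].
  - by move=> r x1 h1 z hz; rewrite -mulrA; apply: (idl_M _ hK); apply: h1.
have HS : forall a, S a -> J a.
  move=> a ha z; apply: (gen_ideal_sub (ideal_lmul a hK)).
  by move=> b hb; apply: h.
exact: (gen_ideal_sub hJ HS hx y hy).
Qed.

Lemma mul_mul_sub I J I' J' K : is_ideal K ->
  (forall a b, I a -> J b -> forall a' b', I' a' -> J' b' -> K (a * b * (a' * b'))) ->
  forall x y, mul_ideal I J x -> mul_ideal I' J' y -> K (x * y).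
Proof.
move=> hK h; apply: gen_mul_sub => // _ _ [a [b [ha hb ->]]] [a' [b' [ha' hb' ->]]].
exact: h.
Qed.

End Ideals.

Lemma det_cong (R : comPzRingType) (I : R -> Prop) r (A B : 'M[R]_r) :
  is_ideal I -> (forall i j, I (A i j - B i j)) -> I (\det A - \det B).
Proof.
move=> hI h.
pose K := fun x y : R => I (x - y).
have K0 : forall x, K x x by move=> x; rewrite /K subrr; apply: idl_0.
have KD : forall x1 x2 y1 y2, K x1 x2 -> K y1 y2 -> K (x1 + y1) (x2 + y2).
  by move=> x1 x2 y1 y2 h1 h2; rewrite /K /= opprD addrACA; exact: (idl_D hI h1 h2).
have KM : forall x1 x2 y1 y2, K x1 x2 -> K y1 y2 -> K (x1 * y1) (x2 * y2).
  move=> x1 x2 y1 y2 h1 h2; rewrite /K /= in h1 h2 *.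
  have -> : x1 * y1 - x2 * y2 = x1 * (y1 - y2) + (x1 - x2) * y2.
    by rewrite mulrBr mulrBl addrA subrK.
  exact: (idl_D hI (idl_M _ hI h2) (idl_Mr _ hI h1)).
rewrite /determinant; apply: (@big_ind2 R R K 0 +%R 0 +%R) => // s _.
apply: (KM); first exact: K0.
have := @big_ind2 R R K 1 *%R 1 *%R (K0 1) KM _ (index_enum _) xpredT
  (fun i => A i (s i)) (fun i => B i (s i)).
by apply => i _; apply: h.
Qed.

Lemma gen_seq_coef (R : comPzRingType) (s : seq R) x :
  gen_ideal (fun y => y \in s) x ->
  exists w : 'I_(size s) -> R, x = \sum_u w u * s`_u.
Proof.
case=> ps [hps ->]; elim: ps hps => [|p ps IH] hps.
  by exists (fun _ => 0); rewrite big_nil big1 // => u _; rewrite mul0r.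
have [|w hw] := IH; first by move=> q hq; apply: hps; rewrite inE hq orbT.
have hp : p.2 \in s by apply: hps; rewrite inE eqxx.
have hu : (index p.2 s < size s)%N by rewrite index_mem.
pose u0 : 'I_(size s) := Ordinal hu.
exists (fun u => w u + (u == u0)%:R * p.1).
rewrite big_cons hw.
rewrite [RHS](eq_bigr (fun u => w u * s`_u + (u == u0)%:R * p.1 * s`_u)) => [|u _];
  last by rewrite mulrDl.
rewrite big_split /=.
have -> : \sum_(i < size s) (i == u0)%:R * p.1 * s`_i = p.1 * p.2.
  rewrite (bigD1 u0) //= eqxx mul1r big1 => [|i /negbTE ->]; last by rewrite !mul0r.
  by rewrite addr0 nth_index.
by rewrite addrC.
Qed.

Lemma det0_of_kernel (R : idomainType) r (M : 'M[R]_r) (v : 'cV[R]_r) u :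
  M *m v = 0 -> v u 0 != 0 -> \det M = 0.
Proof.
move=> hMv hv.
have := congr1 (fun A => (\adj M *m A) u 0) hMv.
rewrite /= mulmxA mul_adj_mx mul_scalar_mx mulmx0 !mxE => /eqP.
by rewrite mulf_eq0 (negbTE hv) orbF => /eqP.
Qed.

Lemma char_poly_horner (F : fieldType) r (A : 'M[F]_r) z :
  (char_poly A).[z] = \det (z%:M - A).
Proof.
rewrite -horner_evalE -det_map_mx; congr (\det _).
rewrite raddfB/= map_scalar_mx; apply/matrixP=> i j.
by rewrite !mxE /= !horner_evalE hornerX hornerC.
Qed.

Lemma integral_part (R : idomainType) r (C : 'M[R]_r) (v : 'cV[R]_r) u (y c : R) :
  integrally_closed R -> c != 0 -> v u 0 != 0 ->
  (y%:M - c *: C) *m v = 0 -> exists r0, y = r0 * c.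
Proof.
move=> hic hc hv hM.
have hdet := det0_of_kernel hM hv.
have htc : tofrac c != 0 by rewrite tofrac_eq0.
have [r0 hr0] : exists r0 : R, tofrac y / tofrac c = FracField.tofrac r0.
  apply: hic; exists (char_poly C); split; first exact: char_poly_monic.
  rewrite /root map_char_poly char_poly_horner.
  have -> : (tofrac y / tofrac c)%:M - map_mx (@tofrac R) C = (tofrac c)^-1 *: map_mx (@tofrac R) (y%:M - c *: C).
    apply/matrixP => i j; rewrite !mxE.
    rewrite rmorphB /= rmorphM /= rmorphMn /=.
    by rewrite mulrBr mulrA mulVf // mul1r mulrnAr [_^-1 * _]mulrC.
  by apply/eqP; rewrite detZ det_map_mx hdet rmorph0 mulr0.
exists r0; apply/eqP; rewrite -tofrac_eq tofracM -hr0 divfK //.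
Qed.

Lemma cancel_ideal (R : idomainType) (X N : R -> Prop) (c : R) :
  integrally_closed R -> noetherian R -> is_ideal X -> is_ideal N ->
  nonzero_ideal N -> c != 0 ->
  (forall y m, X y -> N m -> exists z, N z /\ y * m = c * z) ->
  (forall m, N m -> mul_ideal X N (c * m)) ->
  eq_ideal X (principal_ideal c).
Proof.
move=> hic hnoeth hX hN [x0 [Nx0 x0n0]] hc h1 h2.
have [s hs] := hnoeth N hN.
pose v : 'cV[R]_(size s) := \col_u s`_u.
have Ns : forall u : 'I_(size s), N s`_u.
  by move=> u; apply/(hs _).2/gen_ideal_in/mem_nth.
have [u0 hu0] : exists u : 'I_(size s), s`_u != 0.
  case: (boolP [exists u : 'I_(size s), s`_u != 0]) => [/existsP //|/existsPn hall].
  have [w hw] := gen_seq_coef ((hs x0).1 Nx0).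
  exfalso; apply: x0n0; rewrite hw big1 // => u _.
  by move: (hall u); rewrite negbK => /eqP ->; rewrite mulr0.
have hv : v u0 0 != 0 by rewrite mxE.
have P1 : forall y, X y -> exists r0, y = r0 * c.
  move=> y hy.
  have : forall u : 'I_(size s), exists w : 'I_(size s) -> R,
      y * s`_u = c * \sum_t w t * s`_t.
    move=> u; have [z [hz ->]] := h1 y s`_u hy (Ns u).
    by have [w hw] := gen_seq_coef ((hs z).1 hz); exists w; rewrite hw.
  case/fin_all_exists => W hW.
  pose C := \matrix_(u, t) W u t.
  apply: (integral_part (C := C) hic hc hv).
  apply/matrixP => u j; rewrite mulmxBl mul_scalar_mx -scalemxAl !mxE (hW u).
  apply/eqP; rewrite subr_eq0; apply/eqP; congr (c * _).
  by apply: eq_bigr => t _; rewrite !mxE.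
pose X' := fun a => X (a * c).
have hX' : is_ideal X'.
  split; rewrite /X'.
  - by rewrite mul0r; apply: idl_0.
  - by move=> a b ha hb; rewrite mulrDl; exact (idl_D hX ha hb).
  - by move=> a b hb; rewrite -mulrA; exact (idl_M _ hX hb).
pose KK := fun x => exists w : 'I_(size s) -> R,
   (forall t, X' (w t)) /\ x = c * \sum_t w t * s`_t.
have hKK : is_ideal KK.
  split.
  - exists (fun _ => 0); split; first by move=> t; apply: idl_0.
    by rewrite big1 ?mulr0 // => t _; rewrite mul0r.
  - move=> a b [w1 [h1w ->]] [w2 [h2w ->]]; exists (fun t => w1 t + w2 t); split.
      by move=> t; apply: idl_D.
    by rewrite -mulrDr -big_split /=; congr (c * _); apply: eq_bigr => t _; rewrite mulrDl.
  - move=> a b [w [hw ->]]; exists (fun t => a * w t); split.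
      by move=> t; apply: idl_M.
    by rewrite mulrCA; congr (c * _); rewrite mulr_sumr; apply: eq_bigr => t _; rewrite mulrA.
have coefX : forall x, mul_ideal X N x -> KK x.
  apply: mul_ideal_sub => // a b ha hb.
  have [a' ea] := P1 a ha; rewrite ea in ha *.
  have [w hw] := gen_seq_coef ((hs b).1 hb).
  exists (fun t => a' * w t); split.
    by move=> t; rewrite /X' mulrAC; exact (idl_Mr _ hX ha).
  rewrite hw mulr_sumr mulr_sumr; apply: eq_bigr => t _.
  by rewrite !mulrA [c * a']mulrC.
have : forall u : 'I_(size s), exists w : 'I_(size s) -> R,
    (forall t, X' (w t)) /\ s`_u = \sum_t w t * s`_t.
  move=> u; have [w [hw e]] := coefX _ (h2 _ (Ns u)).
  by exists w; split => //; apply: (mulfI hc).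
case/fin_all_exists => W hW.
pose C := \matrix_(u, t) W u t.
have hdet : \det (1%:M - C) = 0.
  apply: (det0_of_kernel (v := v) _ hv).
  apply/matrixP => u j; rewrite mulmxBl mul1mx !mxE (hW u).2.
  apply/eqP; rewrite subr_eq0; apply/eqP.
  by apply: eq_bigr => t _; rewrite !mxE.
have Xc : X c.
  have := det_cong (A := 1%:M - C) (B := 1%:M) hX' _.
  rewrite hdet det1 sub0r => H.
  have := idl_N hX' (H _); rewrite opprK /X' mul1r; apply.
  by move=> i j; rewrite !mxE addrAC subrr add0r; exact (idl_N hX' ((hW i).1 j)).
move=> x; split.
  by move=> hx; have [r0 ->] := P1 x hx; exists r0.
by case=> r0 ->; apply: idl_M.
Qed.

Lemma block_det (R : comPzRingType) p q (H : 'M[R]_(p + q)) (c : R) :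
  H *m H^T = c%:M -> \det H * \det (drsubmx H) = c ^+ q * \det (ulsubmx H).
Proof.
move=> hH.
have : block_mx (ulsubmx H) (ursubmx H) (dlsubmx H) (drsubmx H) *m
  (block_mx (ulsubmx H) (ursubmx H) (dlsubmx H) (drsubmx H))^T = c%:M
  by rewrite submxK.
rewrite tr_block_mx mulmx_block.
rewrite [c%:M](scalar_mx_block p q) => /eq_block_mx [_ e1 _ e2].
pose M := block_mx 1%:M (dlsubmx H)^T 0 (drsubmx H)^T.
have := det_mulmx H M.
rewrite -{1}(submxK H) mulmx_block !mulmx1 !mulmx0 !addr0 e1 e2.
rewrite det_lblock det_ublock det_scalar det1 mul1r det_tr => <-.
by rewrite mulrC.
Qed.

Lemma perm_ext k q (f : 'I_k -> 'I_(k + q)) : injective f ->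
  exists s : 'S_(k + q), forall a, s (lshift q a) = f a.
Proof.
move=> finj.
pose A := [set f a | a in 'I_k].
have cA : #|~: A| = q.
  have := cardsC A; rewrite card_imset // card_ord card_ord => /eqP.
  by rewrite eqn_add2l => /eqP.
pose g := fun x : 'I_(k + q) => match split x with
  | inl a => f a
  | inr b => @enum_val _ (mem (~: A)) (cast_ord (esym cA) b) end.
have ginj : injective g.
  move=> x y; rewrite -[x]splitK -[y]splitK /g.
  case: (split x) => a; case: (split y) => b; rewrite !unsplitK.
  - by move=> /finj ->.
  - move=> e; have := enum_valP (cast_ord (esym cA) b).
    by rewrite -e inE imset_f.
  - move=> e; have := enum_valP (cast_ord (esym cA) a).
    by rewrite e inE imset_f.
  - by move=> /enum_val_inj /cast_ord_inj ->.
exists (perm ginj) => a.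
by rewrite permE /g (unsplitK (inl _ a)).
Qed.

Lemma det_mxsub_noninj (R : comPzRingType) m k (f h : 'I_k -> 'I_m) (G : 'M[R]_m) :
  ~~ injectiveb f || ~~ injectiveb h -> \det (mxsub f h G) = 0.
Proof.
case/orP => /injectivePn [i1 [i2 ne e]].
  by apply: (determinant_alternate ne) => j; rewrite !mxE e.
rewrite -det_tr; apply: (determinant_alternate ne) => j; rewrite !mxE e.
by [].
Qed.

Lemma minor_compl_kq (R : comPzRingType) k q (G : 'M[R]_(k + q)) (c : R)
  (f h : 'I_k -> 'I_(k + q)) :
  G *m G^T = c%:M ->
  exists y, det_ideal G q y /\ c ^+ q * \det (mxsub f h G) = \det G * y.
Proof.
move=> hG.
case: (boolP (~~ injectiveb f || ~~ injectiveb h)) => [hn|].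
  exists 0; split; first exact: idl_0 (gen_ideal_is_ideal _).
  by rewrite det_mxsub_noninj // mulr0 mulr0.
rewrite negb_or !negbK => /andP [/injectiveP fi /injectiveP hi].
have [s hs] := perm_ext fi.
have [s' hs'] := perm_ext hi.
pose H := mxsub s s' G.
have hH : H *m H^T = c%:M.
  apply/matrixP => i j; rewrite !mxE.
  have := congr1 (fun M : 'M[R]_(k + q) => M (s i) (s j)) hG; rewrite /= !mxE (inj_eq perm_inj) => <-.
  rewrite [RHS](reindex_inj (@perm_inj _ s')) /=.
  by apply: eq_bigr => t _; rewrite !mxE.
have eH : H = perm_mx s *m G *m perm_mx s'^-1.
  by rewrite -row_permE -col_permE; apply/matrixP => i j; rewrite !mxE.
have := block_det hH.
have -> : ulsubmx H = mxsub f h G.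
  by apply/matrixP => i j; rewrite !mxE hs hs'.
move=> <-.
exists ((-1) ^+ s * (-1) ^+ (s'^-1)%g * \det (drsubmx H)); split.
  apply: idl_M (gen_ideal_is_ideal _) _; apply: gen_ideal_in.
  exists (fun i => s (rshift k i)), (fun i => s' (rshift k i)).
  by congr (\det _); apply/matrixP => i j; rewrite !mxE.
rewrite eH !det_mulmx !det_perm.
set z := \det (drsubmx _); rewrite !mulrA; congr (_ * _); by rewrite [_ * \det G]mulrC.
Qed.

Lemma minor_compl (R : comPzRingType) n (G : 'M[R]_n) (c : R) k :
  (k <= n)%N -> G *m G^T = c%:M -> forall x, det_ideal G k x ->
  exists y, det_ideal G (n - k) y /\ c ^+ (n - k) * x = \det G * y.
Proof.
move=> hk hG.
have [q hq] : exists q, n = (k + q)%N by exists (n - k)%N; rewrite subnKC.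
subst n; rewrite addKn.
pose P := fun x => exists y, det_ideal G q y /\ c ^+ q * x = \det G * y.
have hP : is_ideal P.
  split.
  - exists 0; split; [exact: idl_0 (gen_ideal_is_ideal _) | by rewrite !mulr0].
  - move=> x1 x2 [y1 [h1 e1]] [y2 [h2 e2]]; exists (y1 + y2); split.
      exact: idl_D (gen_ideal_is_ideal _) h1 h2.
    by rewrite mulrDr e1 e2 mulrDr.
  - move=> r x [y [hy e]]; exists (r * y); split.
      exact: idl_M _ (gen_ideal_is_ideal _) hy.
    by rewrite mulrCA e mulrCA.
apply: gen_ideal_sub hP _ => _ [f [h ->]]; exact: minor_compl_kq.
Qed.

Lemma det_ideal_down (R : comPzRingType) n (G : 'M[R]_n) k x :
  det_ideal G k.+1 x -> det_ideal G k x.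
Proof.
move: x; apply: (gen_ideal_sub (gen_ideal_is_ideal _)) => _ [f [h ->]].
rewrite (expand_det_row _ ord0); apply: ideal_sum (gen_ideal_is_ideal _) _ => j _.
apply: idl_M (gen_ideal_is_ideal _) _; rewrite /cofactor.
apply: idl_M (gen_ideal_is_ideal _) _.
apply: gen_ideal_in; exists (fun i => f (lift ord0 i)), (fun i => h (lift j i)).
by congr (\det _); apply/matrixP => a b; rewrite !mxE.
Qed.

Lemma det_ideal_le (R : comPzRingType) n (G : 'M[R]_n) k m x :
  det_ideal G (k + m) x -> det_ideal G k x.
Proof.
elim: m => [|m IH]; first by rewrite addn0.
by rewrite addnS => /det_ideal_down; apply: IH.
Qed.

Lemma detG_in (R : comPzRingType) n (G : 'M[R]_n) : det_ideal G n (\det G).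
Proof.
apply: gen_ideal_in; exists id, id.
by congr (\det _); apply/matrixP => a b; rewrite !mxE.
Qed.

End Aux.
Import Aux.

Theorem lemma2p6 (R : idomainType) (n : nat) (G : 'M[R]_n) (l : R)
  (d : nat -> R -> Prop) :
  dedekind R -> l != 0 -> G *m G^T = (l ^+ 2)%:M ->
  smith_ideals G d ->
  forall i : nat, (1 <= i)%N -> (i.*2 <= n)%N ->
    eq_ideal (mul_ideal (d i) (d (n - i + 1)%N)) (principal_ideal (l ^+ 2)).
Proof.
move=> [hnoeth hic _] hl hG [hd1 hd] i hi1; rewrite -addnn => hin.
set c := l ^+ 2 in hG *.
have hc : c != 0 by rewrite expf_neq0.
pose D := det_ideal G.
have Did : forall k, is_ideal (D k) := fun k => gen_ideal_is_ideal _.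
have hg2 : \det G ^+ 2 = c ^+ n.
  by have := congr1 determinant hG; rewrite det_mulmx det_tr det_scalar expr2.
have hg : \det G != 0.
  have := expf_neq0 n hc; rewrite -hg2; apply: contraNneq => ->.
  by rewrite expr2 mulr0.
have hn0 : (0 < n)%N by lia.
have Dnz : forall k, (k <= n)%N -> D k (\det G).
  move=> k hk; apply: (@det_ideal_le _ _ G k (n - k)).
  by rewrite subnKC //; apply: detG_in.
have Compl : forall k x, (k <= n)%N -> D k x ->
    exists y, D (n - k)%N y /\ c ^+ (n - k) * x = \det G * y.
  by move=> k x hk; apply: minor_compl.
have sm : forall k, (1 <= k <= n)%N ->
   [/\ is_ideal (d k), (forall u w, d k u -> D k.-1 w -> D k (u * w)) &
       (forall x, D k x -> mul_ideal (d k) (D k.-1) x)].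
  move=> k /andP [hk1 hkn].
  case: (ltngtP k 1) => [|hk|ek]; first by lia.
    have [] := (hd k); first by lia.
    move=> /(_ _) [|hdi heq].
      by exists (\det G); split; [apply: Dnz; lia | apply/eqP].
    split => //.
      by move=> u w hu hw; apply/(heq _).1/mul_ideal_in.
    by move=> x hx; apply/(heq _).2.
  subst k.
  have hdi : is_ideal (d 1%N).
    case: (Did 1%N) => h0 hD hM; split.
    - exact/(hd1 _).2.
    - by move=> x y /(hd1 _).1 hx /(hd1 _).1 hy; apply/(hd1 _).2; apply: hD.
    - by move=> r x /(hd1 _).1 hx; apply/(hd1 _).2; apply: hM.
  split => //.
    by move=> u w /(hd1 _).1 hu _; apply: idl_Mr (Did _) hu.
  move=> x hx; rewrite -[x]mulr1; apply: mul_ideal_in; first exact/(hd1 _).2.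
  apply: gen_ideal_in.
  exists (fun _ => Ordinal hn0), (fun _ => Ordinal hn0).
  by rewrite det_mx00.
have [smi1 smi2 smi3] := sm i (ltac:(lia)).
have [smj1 smj2 smj3] := sm (n - i + 1)%N (ltac:(lia)).
have ej : (n - i + 1).-1 = (n - i)%N by rewrite addn1.
rewrite ej in smj2 smj3.
have X1 : is_ideal (mul_ideal (d i) (d (n - i + 1)%N)) := mul_ideal_is_ideal _ _.
have N1 : is_ideal (mul_ideal (D i.-1) (D (n - i)%N)) := mul_ideal_is_ideal _ _.
apply: (cancel_ideal (N := mul_ideal (D i.-1) (D (n - i)%N)) hic hnoeth X1 N1 _ hc).
- exists (\det G * \det G); split; first by apply: mul_ideal_in; apply: Dnz; lia.
  by apply/eqP; rewrite mulf_neq0.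
- move=> y m hy hm.
  pose K := fun t => exists z, mul_ideal (D i.-1) (D (n - i)%N) z /\ t = c * z.
  have hK : is_ideal K := ideal_scale c N1.
  have := mul_mul_sub (K := K) hK _ hy hm.
  case => [u v hu hv w z hw hz|z [hz ->]]; last by exists z.
  have hp := smi2 _ _ hu hw.
  have hq := smj2 _ _ hv hz.
  have [p' [hp' e1]] := Compl i _ (ltac:(lia)) hp.
  have [q' [hq' e2]] := Compl (n - i + 1)%N _ (ltac:(lia)) hq.
  have ea : (n - (n - i + 1))%N = i.-1 by lia.
  rewrite ea in hq' e2.
  exists (q' * p'); split; first exact: mul_ideal_in.
  have hn : n = ((n - i) + i.-1).+1 by lia.
  have hg2' : \det G ^+ 2 = c * (c ^+ (n - i) * c ^+ i.-1) by rewrite hg2 -exprD -exprS -hn.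
  apply: (mulfI (expf_neq0 ((n - i) + i.-1) hc)).
  rewrite exprD.
  transitivity ((c ^+ (n - i) * (u * w)) * (c ^+ i.-1 * (v * z))); first by ring.
  rewrite e1 e2.
  transitivity (\det G ^+ 2 * (q' * p')); first by ring.
  rewrite hg2'; ring.
- move=> m hm.
  have hK : is_ideal (fun t => mul_ideal (mul_ideal (d i) (d (n - i + 1)%N))
       (mul_ideal (D i.-1) (D (n - i)%N)) (c * t)) :=
    ideal_lmul c (mul_ideal_is_ideal _ _).
  move: m hm; apply: (mul_ideal_sub hK) => w z hw hz.
  have [w' [hw' e1]] := Compl i.-1 _ (ltac:(lia)) hw.
  have [z' [hz' e2]] := Compl (n - i)%N _ (ltac:(lia)) hz.
  have ea : (n - i.-1)%N = (n - i + 1)%N by lia.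
  have eb : (n - (n - i))%N = i by lia.
  rewrite ea in hw' e1; rewrite eb in hz' e2.
  have -> : c * (w * z) = z' * w'.
    apply: (mulfI (expf_neq0 n hc)).
    have hn : (n - i + 1 + i)%N = n.+1 by lia.
    have hcc : c ^+ (n - i + 1) * c ^+ i = c ^+ n * c by rewrite -exprD hn exprSr.
    transitivity ((c ^+ (n - i + 1) * c ^+ i) * (w * z)); first by rewrite hcc; ring.
    transitivity ((c ^+ (n - i + 1) * w) * (c ^+ i * z)); first by ring.
    rewrite e1 e2 -hg2; ring.
  move: (smi3 _ hz') (smj3 _ hw').
  apply: mul_mul_sub; first exact: mul_ideal_is_ideal.
  move=> u w0 hu hw0 v z0 hv hz0.
  have -> : u * w0 * (v * z0) = (u * v) * (w0 * z0) by ring.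
  by apply: mul_ideal_in; apply: mul_ideal_in.
Qed.
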